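(* Let $\alpha\in\mathbb{R}$, let $p$ be a positive integer, $b\in\mathbb{R}$, and let $f$ be defined only on ${}_{b}\mathbb{N}$. Then for all $t\in{}_{b-2p+1}\mathbb{N}$, $${}_{b-p+1}\nabla^{-\alpha}\,{}_{\ominus}\Delta^p f(t)={}_{\ominus}\Delta^p\,{}_{b-p+1}\nabla^{-\alpha}f(t)-\sum_{k=0}^{p-1}\frac{(b-p+1-t)^{\overline{\alpha-p+k}}}{\Gamma(\alpha+k-p+1)}\,{}_{\ominus}\Delta^k f(b-p+1).$$
   Context: Notation: ${}_{c}\mathbb{N}=\{c,c-1,\dots\}$, $\rho(t)=t-1$, $\Delta g(t)=g(t+1)-g(t)$, ${}_{\ominus}\Delta^m g=(-1)^m\Delta^m g$. Rising factorial: $t^{\overline{\beta}}=\Gamma(t+\beta)/\Gamma(t)$ with $0^{\overline{\beta}}=0$; the reciprocal of $\Gamma$ at a pole is $0$. For $\gamma>0$ and endpoint $c$, the nabla right fractional sum is ${}_{c}\nabla^{-\gamma}g(t)=\frac{1}{\Gamma(\gamma)}\sum_{s=t}^{c-1}(s-\rho(t))^{\overline{\gamma-1}}g(s)$, a sum with upper limit smaller than lower limit being $0$. For $\beta>0$ let $n=[\beta]+1$ with $[\beta]$ the greatest integer strictly less than $\beta$; the nabla right fractional difference is ${}_{c}\nabla^{\beta}g(t)=(-1)^n\Delta^n\,{}_{c}\nabla^{-(n-\beta)}g(t)$ (order-$0$ operator = identity). For $\alpha<0$, ${}_{c}\nabla^{-\alpha}$ denotes the nabla right fractional difference of order $-\alpha$;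 for $\alpha=0$ the identity. *)

(* Defs.v *)
From Stdlib Require Import Reals Factorial ClassicalEpsilon.
Open Scope R_scope.

(** Gauss' product for the reciprocal Gamma function:
    1/Gamma(x) = lim_{N->oo} x(x+1)...(x+N) / (N! N^x).
    This limit exists for every real x and vanishes exactly at the poles
    0,-1,-2,... of Gamma. *)
Definition inv_gamma_seq (x : R) (n : nat) : R :=
  prod_f_R0 (fun i => x + INR i) (S n) / (INR (fact (S n)) * Rpower (INR (S n)) x).

Definition RGammaInv (x : R) : R :=
  epsilon (inhabits 0) (fun l => Un_cv (inv_gamma_seq x) l).

(** Gamma := 1 / (1/Gamma).  At a pole RGammaInv x = 0, so Gamma x = /0;
    since [/ 0 = 0] in Stdlib ([Rinv_0]), we get 1/Gamma = 0 at a pole,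
    which is the paper's convention. *)
Definition Gamma (x : R) : R := / RGammaInv x.

Definition rising (t beta : R) : R :=
  if Req_dec_T t 0 then 0 else Gamma (t + beta) / Gamma t.

Fixpoint rsum (n : nat) (F : nat -> R) : R :=
  match n with
  | O => 0
  | S m => rsum m F + F m
  end.

Definition Delta (g : R -> R) : R -> R := fun t => g (t + 1) - g t.
Fixpoint DeltaN (m : nat) (g : R -> R) : R -> R :=
  match m with
  | O => g
  | S k => Delta (DeltaN k g)
  end.
Definition oDelta (m : nat) (g : R -> R) : R -> R :=
  fun t => (-1) ^ m * DeltaN m g t.

(** The set  _c N = {c, c-1, c-2, ...}. *)
Definition inN (c t : R) : Prop := exists n : nat, t = c - INR n.

(** Nabla right fractional sum of order gamma > 0 with endpoint c:
    (1/Gamma(gamma)) sum_{s=t}^{c-1} (s - rho(t))^{(gamma-1)} g(s),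
    where s runs over t, t+1, ..., c-1 (empty if c-1 < t).  The number of
    terms is floor(c - t) = up(c - t) - 1 (equal to c - t when c - t is an
    integer, which is the case on the lattice). *)
Definition nabla_sum (c gamma : R) (g : R -> R) : R -> R :=
  fun t =>
    / Gamma gamma *
    rsum (Z.to_nat (up (c - t) - 1))
      (fun j => rising ((t + INR j) - (t - 1)) (gamma - 1) * g (t + INR j)).

(** [beta] = greatest integer strictly less than beta  (= -up(-beta)). *)
Definition gis (beta : R) : Z := (- up (- beta))%Z.

Definition nabla_diff (c beta : R) (g : R -> R) : R -> R :=
  let n := Z.to_nat (gis beta + 1) in
  fun t =>
    (-1) ^ n *
    DeltaN n (if Req_dec_T (INR n - beta) 0 then g
              else nabla_sum c (INR n - beta) g) t.

Definition nabla_op (c alpha : R) (g : R -> R) : R -> R :=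
  if Rlt_dec 0 alpha then nabla_sum c alpha g
  else if Req_dec_T alpha 0 then g
  else nabla_diff c (- alpha) g.

(* Main.v *)
Require Import Defs.
From Stdlib Require Import Reals Factorial Lra Lia ZArith ClassicalEpsilon FunctionalExtensionality.
Open Scope R_scope.

Lemma nat_big (r : R) : exists n : nat, r < INR n.
Proof. destruct (INR_archimed 1 r) as [n Hn]; [lra|]. exists n; lra. Qed.

Lemma cv_const (c : R) : Un_cv (fun _ => c) c.
Proof. intros e He. exists O. intros n _. unfold Rdist. rewrite Rminus_diag, Rabs_R0; lra. Qed.

Lemma cv_inv_shift (a : R) : Un_cv (fun n => / (INR n + a)) 0.
Proof.
  apply cv_infty_cv_0. intros M. destruct (nat_big (M - a)) as [N HN].
  exists N. intros n Hn. apply le_INR in Hn. lra.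
Qed.

Lemma cv_ext (u v : nat -> R) l : (forall n, u n = v n) -> Un_cv u l -> Un_cv v l.
Proof. intros H. replace v with u; auto. apply functional_extensionality; auto. Qed.

Lemma cvx (a x : R) : 0 < a -> 0 <= x <= 1 -> Rpower a x <= 1 + x * (a - 1).
Proof.
  intros Ha Hx. unfold Rpower.
  set (L := ln a). set (y := x * L). set (E := exp y).
  assert (HE : 0 < E) by apply exp_pos.
  assert (H1 : exp L = E * exp (L - y)).
  { unfold E. rewrite <- exp_plus. f_equal. ring. }
  assert (H2 : 1 = E * exp (- y)).
  { unfold E. rewrite <- exp_plus. replace (y + - y) with 0 by ring. now rewrite exp_0. }
  assert (Ha' : a = exp L) by (unfold L; now rewrite exp_ln).
  pose proof (exp_ineq1_le (L - y)). pose proof (exp_ineq1_le (- y)).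
  assert (x * E * (1 + (L - y)) <= x * E * exp (L - y)).
  { apply Rmult_le_compat_l; [apply Rmult_le_pos; lra | lra]. }
  assert ((1 - x) * E * (1 + - y) <= (1 - x) * E * exp (- y)).
  { apply Rmult_le_compat_l; [apply Rmult_le_pos; lra | lra]. }
  assert (x * E * (1 + (L - y)) + (1 - x) * E * (1 + - y) = E) by (unfold y; ring).
  assert (E <= x * (E * exp (L - y)) + (1 - x) * (E * exp (- y))) by lra.
  rewrite <- H1, <- H2, <- Ha' in H6. fold E. lra.
Qed.

Lemma prodS f m : prod_f_R0 f (S m) = prod_f_R0 f m * f (S m).
Proof. reflexivity. Qed.

Lemma prod_shift (x : R) (m : nat) :
  prod_f_R0 (fun i => x + 1 + INR i) m * x = prod_f_R0 (fun i => x + INR i) m * (x + INR m + 1).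
Proof.
  induction m as [|m IH].
  - simpl. ring.
  - rewrite !prodS. rewrite S_INR.
    replace (prod_f_R0 (fun i : nat => x + 1 + INR i) m * (x + 1 + (INR m + 1)) * x)
      with (prod_f_R0 (fun i : nat => x + 1 + INR i) m * x * (x + 1 + (INR m + 1))) by ring.
    rewrite IH. ring.
Qed.

Lemma Rpow_pos a x : 0 < Rpower a x.
Proof. unfold Rpower. apply exp_pos. Qed.

Lemma fact_pos n : 0 < INR (fact n).
Proof. apply lt_0_INR. apply lt_O_fact. Qed.

Lemma seq_rel (x : R) (n : nat) :
  inv_gamma_seq (x + 1) n * (x * INR (S n)) = inv_gamma_seq x n * (x + INR (S n) + 1).
Proof.
  unfold inv_gamma_seq.
  rewrite Rpower_plus, Rpower_1 by (apply lt_0_INR; lia).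
  pose proof (prod_shift x (S n)) as H.
  pose proof (Rpow_pos (INR (S n)) x). pose proof (fact_pos (S n)).
  assert (0 < INR (S n)) by (apply lt_0_INR; lia).
  set (P' := prod_f_R0 (fun i : nat => x + 1 + INR i) (S n)) in *.
  set (P := prod_f_R0 (fun i : nat => x + INR i) (S n)) in *.
  transitivity ((P' * x) / (INR (fact (S n)) * Rpower (INR (S n)) x)).
  { field. repeat split; lra. }
  rewrite H. field. split; lra.
Qed.

Lemma conv_up x l : x <> 0 -> Un_cv (inv_gamma_seq x) l -> Un_cv (inv_gamma_seq (x + 1)) (l / x).
Proof.
  intros Hx Hl.
  assert (Hc : Un_cv (fun n => (x + 1) * pos (RinvN n)) ((x+1) * 0)).
  { apply CV_mult; [apply cv_const | apply RinvN_cv]. }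
  assert (Hd := CV_plus _ _ _ _ (cv_const 1) Hc).
  assert (He := CV_mult _ _ _ _ Hl Hd).
  assert (Hf := CV_mult _ _ _ _ He (cv_const (/ x))).
  replace (l / x) with (l * (1 + (x + 1) * 0) * / x) by (field; auto).
  eapply cv_ext; [|exact Hf]. intros n. simpl.
  pose proof (seq_rel x n). assert (0 < INR (S n)) by (apply lt_0_INR; lia).
  rewrite S_INR in *.
  apply (Rmult_eq_reg_r (x * (INR n + 1))); [| apply Rmult_integral_contrapositive; split; lra].
  rewrite H. field. split; lra.
Qed.

Lemma conv_down x l : Un_cv (inv_gamma_seq (x + 1)) l -> Un_cv (inv_gamma_seq x) (x * l).
Proof.
  intros Hl. destruct (nat_big (- x - 2)) as [K HK].
  apply (CV_shift _ K).
  assert (H1 := CV_shift' _ K _ Hl).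
  assert (H2 := CV_shift' _ K _ (cv_inv_shift (x + 2))).
  assert (Hc := CV_minus _ _ _ _ (cv_const 1) (CV_mult _ _ _ _ (cv_const (x + 1)) H2)).
  assert (Hf := CV_mult _ _ _ _ (CV_mult _ _ _ _ H1 (cv_const x)) Hc).
  replace (x * l) with (l * x * (1 - (x + 1) * 0)) by ring.
  eapply cv_ext; [|exact Hf]. intros n. simpl.
  pose proof (seq_rel x (n + K)). rewrite S_INR in H. rewrite plus_INR in *.
  assert (0 <= INR n) by apply pos_INR.
  assert (Hd : INR n + INR K + (x + 2) <> 0) by lra.
  replace (inv_gamma_seq x (n + K)) with
    (inv_gamma_seq (x + 1) (n + K) * (x * (INR n + INR K + 1)) / (INR n + INR K + (x+2))).
  2:{ rewrite H. field. lra. }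
  field. auto.
Qed.

Lemma div_le p q r s : 0 < q -> 0 < s -> p * s <= r * q -> p / q <= r / s.
Proof.
  intros Hq Hs H.
  assert (p / q - r / s = (p * s - r * q) / (q * s)) by (field; lra).
  assert ((p * s - r * q) / (q * s) <= 0).
  { unfold Rdiv. assert (0 < / (q * s)) by (apply Rinv_0_lt_compat, Rmult_lt_0_compat; lra).
    assert (p * s - r * q <= 0) by lra. nra. }
  lra.
Qed.

Lemma prod_pos x m : 0 < x -> 0 < prod_f_R0 (fun i => x + INR i) m.
Proof.
  intros Hx. induction m as [|m IH].
  - simpl. lra.
  - rewrite prodS. apply Rmult_lt_0_compat; auto. pose proof (pos_INR (S m)). lra.
Qed.

Lemma factS n : INR (fact (S n)) = INR (S n) * INR (fact n).
Proof. change (fact (S n)) with (S n * fact n)%nat. apply mult_INR. Qed.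

Lemma conv01 x : 0 < x <= 1 -> exists l, Un_cv (inv_gamma_seq x) l /\ 0 < l.
Proof.
  intros Hx.
  set (b := fun n => prod_f_R0 (fun i => x + INR i) (S n) / (INR (fact (S n)) * Rpower (INR (S (S n))) x)).
  assert (Hdec : Un_decreasing (inv_gamma_seq x)).
  { intros n. unfold inv_gamma_seq. rewrite (prodS _ (S n)), (factS (S n)).
    set (P := prod_f_R0 (fun i => x + INR i) (S n)).
    set (F := INR (fact (S n))).
    set (A := INR (S n)). set (B := INR (S (S n))).
    assert (HB : B = A + 1) by (unfold A, B; rewrite (S_INR (S n)); ring).
    assert (HA : 0 < A) by (unfold A; apply lt_0_INR; lia).
    assert (HP : 0 < P) by (apply prod_pos; lra).
    assert (HF : 0 < F) by apply fact_pos.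
    pose proof (Rpow_pos A x) as HRA. pose proof (Rpow_pos B x) as HRB.
    assert (Hc := cvx (A / B) x ltac:(apply Rdiv_lt_0_compat; lra) ltac:(lra)).
    assert (Hm : Rpower (A / B) x * Rpower B x = Rpower A x).
    { rewrite Rpower_mult_distr by (try apply Rdiv_lt_0_compat; lra). f_equal. field. lra. }
    assert (H1 : Rpower A x <= (B - x) / B * Rpower B x).
    { rewrite <- Hm. apply Rmult_le_compat_r; [lra|]. replace ((B - x) / B) with (1 + x * (A / B - 1)); [lra|]. rewrite HB. field. lra. }
    assert (H2 : (x + B) * Rpower A x <= B * Rpower B x).
    { apply Rle_trans with ((x + B) * ((B - x) / B * Rpower B x)).
      - apply Rmult_le_compat_l; lra.
      - replace ((x + B) * ((B - x) / B * Rpower B x)) with ((B * B - x * x) / B * Rpower B x) by (field; lra).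
        apply Rmult_le_compat_r; [lra|]. apply (Rmult_le_reg_r B); [lra|]. unfold Rdiv. rewrite Rmult_assoc, Rinv_l by lra. nra. }
    apply div_le; try (apply Rmult_lt_0_compat; try apply Rmult_lt_0_compat; lra).
    replace (P * (x + B) * (F * Rpower A x)) with (P * F * ((x + B) * Rpower A x)) by ring.
    replace (P * (B * F * Rpower B x)) with (P * F * (B * Rpower B x)) by ring.
    apply Rmult_le_compat_l; [nra | exact H2]. }
  assert (Hba : forall n, b n <= inv_gamma_seq x n).
  { intros n. unfold b, inv_gamma_seq.
    pose proof (prod_pos x (S n) ltac:(lra)). pose proof (fact_pos (S n)).
    assert (Hle : Rpower (INR (S n)) x <= Rpower (INR (S (S n))) x).
    { apply Rle_Rpower_l; [lra|]. split; [apply lt_0_INR; lia| apply le_INR; lia]. }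
    apply div_le; try (apply Rmult_lt_0_compat; auto; apply Rpow_pos).
    rewrite !(Rmult_comm (prod_f_R0 _ _)). rewrite !Rmult_assoc. apply Rmult_le_compat_l; [lra|].
    apply Rmult_le_compat_r; lra. }
  assert (Hbinc : forall n, b 0%nat <= b n).
  { induction n as [|n IH]; [lra|]. apply Rle_trans with (b n); auto.
    unfold b. rewrite (prodS _ (S n)), (factS (S n)).
    set (P := prod_f_R0 (fun i => x + INR i) (S n)).
    set (F := INR (fact (S n))).
    set (B := INR (S (S n))). set (C := INR (S (S (S n)))).
    assert (HC : C = B + 1) by (unfold C, B; rewrite (S_INR (S (S n))); ring).
    assert (HB : 0 < B) by (unfold B; apply lt_0_INR; lia).
    assert (HP : 0 < P) by (apply prod_pos; lra).
    assert (HF : 0 < F) by apply fact_pos.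
    pose proof (Rpow_pos C x) as HRC. pose proof (Rpow_pos B x) as HRB.
    assert (Hc := cvx (C / B) x ltac:(apply Rdiv_lt_0_compat; lra) ltac:(lra)).
    assert (Hm : Rpower (C / B) x * Rpower B x = Rpower C x).
    { rewrite Rpower_mult_distr by (try apply Rdiv_lt_0_compat; lra). f_equal. field. lra. }
    assert (H2 : B * Rpower C x <= (x + B) * Rpower B x).
    { rewrite <- Hm. replace ((x + B) * Rpower B x) with (B * ((1 + x * (C / B - 1)) * Rpower B x)) by (rewrite HC; field; lra).
      apply Rmult_le_compat_l; [lra|]. apply Rmult_le_compat_r; lra. }
    apply div_le; try (apply Rmult_lt_0_compat; try apply Rmult_lt_0_compat; lra).
    replace (P * (B * F * Rpower C x)) with (P * F * (B * Rpower C x)) by ring.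
    replace (P * (x + B) * (F * Rpower B x)) with (P * F * ((x + B) * Rpower B x)) by ring.
    apply Rmult_le_compat_l; [nra | exact H2]. }
  assert (Hlb : has_lb (inv_gamma_seq x)).
  { exists 0. intros r [i ->]. unfold opp_seq. pose proof (Hba i). pose proof (Hbinc i).
    assert (0 < b 0%nat).
    { unfold b. apply Rdiv_lt_0_compat; [apply prod_pos; lra|]. apply Rmult_lt_0_compat; [apply fact_pos|apply Rpow_pos]. }
    lra. }
  destruct (decreasing_cv _ Hdec Hlb) as [l Hl].
  exists l. split; auto.
  assert (0 < b 0%nat).
  { unfold b. apply Rdiv_lt_0_compat; [apply prod_pos; lra|]. apply Rmult_lt_0_compat; [apply fact_pos|apply Rpow_pos]. }
  assert (b 0%nat <= l).
  { apply (Rle_cv_lim (Un := fun _ => b 0%nat) (Vn := inv_gamma_seq x)); auto.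
    - intros n. eapply Rle_trans; [apply Hbinc | apply Hba].
    - apply cv_const. }
  lra.
Qed.

Lemma decomp x : exists (w : Z), 0 < x - IZR w <= 1.
Proof. exists (- up (- x))%Z. rewrite opp_IZR. destruct (archimed (- x)). lra. Qed.

Lemma INR_Z w : (0 <= w)%Z -> INR (Z.to_nat w) = IZR w.
Proof. intros H. rewrite INR_IZR_INZ. f_equal. lia. Qed.

Lemma conv_all x : exists l, Un_cv (inv_gamma_seq x) l.
Proof.
  destruct (decomp x) as [w Hw]. set (y := x - IZR w) in *.
  destruct (Z_le_gt_dec 0 w) as [Hp|Hn].
  - assert (Hx : x = y + INR (Z.to_nat w)) by (rewrite INR_Z by auto; unfold y; ring).
    rewrite Hx. clear Hx. generalize (Z.to_nat w) as k. intros k.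
    enough ((exists l, Un_cv (inv_gamma_seq (y + INR k)) l) /\ y + INR k > 0) by tauto.
    induction k as [|k [[l Hl] Hk]].
    + simpl. rewrite Rplus_0_r. destruct (conv01 y Hw) as [l [Hl _]]. split; [eauto|lra].
    + rewrite S_INR. replace (y + (INR k + 1)) with ((y + INR k) + 1) by ring.
      split; [|lra]. exists (l / (y + INR k)). apply conv_up; auto; lra.
  - assert (Hx : y = x + INR (Z.to_nat (- w))) by (rewrite INR_Z by lia; rewrite opp_IZR; unfold y; ring).
    rewrite Hx in Hw. clear Hx y. revert x Hw. generalize (Z.to_nat (- w)) as k. intros k.
    induction k as [|k IH]; intros x Hw.
    + simpl in Hw. rewrite Rplus_0_r in Hw. destruct (conv01 x Hw) as [l [Hl _]]. eauto.
    + rewrite S_INR in Hw. destruct (IH (x + 1)) as [l Hl]; [lra|].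
      exists (x * l). apply conv_down; auto.
Qed.

Lemma rgi_spec x : Un_cv (inv_gamma_seq x) (RGammaInv x).
Proof. unfold RGammaInv. apply epsilon_spec. apply conv_all. Qed.

Lemma rgi_rec x : RGammaInv x = x * RGammaInv (x + 1).
Proof.
  assert (H1 := CV_mult _ _ _ _ (rgi_spec (x + 1)) (cv_const x)).
  assert (Hc : Un_cv (fun n => (x + 1) * pos (RinvN n)) ((x+1) * 0)).
  { apply CV_mult; [apply cv_const | apply RinvN_cv]. }
  assert (H2 := CV_mult _ _ _ _ (rgi_spec x) (CV_plus _ _ _ _ (cv_const 1) Hc)).
  assert (RGammaInv (x + 1) * x = RGammaInv x * (1 + (x + 1) * 0)).
  { eapply UL_sequence; [exact H1|]. eapply cv_ext; [|exact H2]. intros n. simpl.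
    pose proof (seq_rel x n). assert (0 < INR (S n)) by (apply lt_0_INR; lia).
    rewrite S_INR in *.
    apply (Rmult_eq_reg_r (INR n + 1)); [|lra].
    replace (inv_gamma_seq x n * (1 + (x + 1) * / (INR n + 1)) * (INR n + 1))
      with (inv_gamma_seq x n * (x + (INR n + 1) + 1)) by (field; lra).
    rewrite <- H. ring. }
  lra.
Qed.

Lemma rgi_pos x : 0 < x -> 0 < RGammaInv x.
Proof.
  intros Hx0. destruct (decomp x) as [w Hw]. set (y := x - IZR w) in *.
  assert (Hp : (0 <= w)%Z).
  { destruct (Z_le_gt_dec 0 w); auto. apply Z.gt_lt, Z.lt_le_pred in g. apply IZR_le in g.
    rewrite <- Z.sub_1_r, minus_IZR in g. simpl in g. unfold y in Hw. lra. }
  assert (Hx : x = y + INR (Z.to_nat w)) by (rewrite INR_Z by auto; unfold y; ring).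
  rewrite Hx. generalize (Z.to_nat w) as k. intros k.
  induction k as [|k IH].
  - simpl. rewrite Rplus_0_r. destruct (conv01 y Hw) as [l [Hl Hl0]].
    rewrite (UL_sequence _ _ _ (rgi_spec y) Hl). auto.
  - rewrite S_INR. replace (y + (INR k + 1)) with ((y + INR k) + 1) by ring.
    pose proof (rgi_rec (y + INR k)) as Hr. pose proof (pos_INR k).
    assert (Hs : 0 < y + INR k) by lra.
    destruct (Rlt_or_le 0 (RGammaInv (y + INR k + 1))) as [|Hle]; auto.
    assert ((y + INR k) * RGammaInv (y + INR k + 1) <= 0).
    { apply (Rmult_le_compat_l (y + INR k)) in Hle; lra. }
    lra.
Qed.

Lemma rgi_1 : RGammaInv 1 = 1.
Proof.
  eapply UL_sequence; [apply rgi_spec|].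
  assert (Hc : Un_cv (fun n => pos (RinvN n)) 0) by apply RinvN_cv.
  assert (H := CV_plus _ _ _ _ (cv_const 1) Hc). rewrite Rplus_0_r in H.
  eapply cv_ext; [|exact H]. intros n. simpl. unfold inv_gamma_seq.
  assert (Hp : forall m, prod_f_R0 (fun i => 1 + INR i) m = INR (fact (S m))).
  { induction m as [|m IH]; [simpl; lra|]. rewrite prodS, IH, (factS (S m)), (S_INR (S m)). ring. }
  rewrite Hp, Rpower_1 by (apply lt_0_INR; lia). rewrite (factS (S n)).
  pose proof (fact_pos (S n)). rewrite S_INR. pose proof (pos_INR n).
  rewrite S_INR. field. lra.
Qed.

Lemma rgi_negint m : RGammaInv (- INR m) = 0.
Proof.
  induction m as [|m IH].
  - simpl. rewrite Ropp_0. rewrite rgi_rec. ring.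
  - rewrite rgi_rec. rewrite S_INR. replace (- (INR m + 1) + 1) with (- INR m) by ring. rewrite IH. ring.
Qed.

Fixpoint hhN (b : R) (j : nat) : R :=
  match j with
  | O => 1
  | S i => hhN b i * (b + INR i) / INR (S i)
  end.

Lemma hhS b j : hhN b (S j) = hhN b j * (b + INR j) / INR (S j).
Proof. reflexivity. Qed.

Lemma hh_rgi b j : RGammaInv b = hhN b j * INR (fact j) * RGammaInv (b + INR j).
Proof.
  induction j as [|j IH].
  - simpl. rewrite Rplus_0_r. ring.
  - rewrite IH. rewrite (rgi_rec (b + INR j)). rewrite hhS. rewrite factS.
    assert (0 < INR (S j)) by (apply lt_0_INR; lia).
    rewrite !S_INR in *. replace (b + (INR j + 1)) with (b + INR j + 1) by ring.
    field. lra.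
Qed.

Lemma hh1 j : hhN 1 j = 1.
Proof.
  induction j as [|j IH]; auto. rewrite hhS, IH, S_INR.
  pose proof (pos_INR j). field. lra.
Qed.

Lemma rgi_fact j : RGammaInv (INR j + 1) * INR (fact j) = 1.
Proof.
  pose proof (hh_rgi 1 j) as H. rewrite rgi_1, hh1 in H. rewrite Rplus_comm. lra.
Qed.

Lemma rising_hh b j : RGammaInv (b + INR j) <> 0 ->
  rising (INR j + 1) (b - 1) * RGammaInv b = hhN b j.
Proof.
  intros Hnz. unfold rising. pose proof (pos_INR j).
  destruct (Req_dec_T (INR j + 1) 0) as [e|_]; [lra|].
  unfold Gamma, Rdiv. rewrite Rinv_inv.
  replace (INR j + 1 + (b - 1)) with (b + INR j) by ring.
  rewrite (hh_rgi b j). pose proof (rgi_fact j). pose proof (fact_pos j).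
  field_simplify; [| auto].
  transitivity (hhN b j * (RGammaInv (INR j + 1) * INR (fact j))); [ring|].
  rewrite H0. ring.
Qed.

Lemma hh_nz b j : (forall i : nat, b + INR i <> 0) -> hhN b j <> 0.
Proof.
  intros H. induction j as [|j IH]; [simpl; lra|]. rewrite hhS.
  assert (0 < INR (S j)) by (apply lt_0_INR; lia).
  unfold Rdiv. repeat apply Rmult_integral_contrapositive_currified; auto.
  apply Rinv_neq_0_compat; lra.
Qed.

Lemma rgi_nonint x : (forall w : Z, x <> IZR w) -> RGammaInv x <> 0.
Proof.
  intros H. destruct (nat_big (- x)) as [k Hk].
  rewrite (hh_rgi x k).
  pose proof (fact_pos k). pose proof (rgi_pos (x + INR k) ltac:(lra)).
  repeat apply Rmult_integral_contrapositive_currified; try lra.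
  apply hh_nz. intros i Hi. apply (H (- Z.of_nat i)%Z). rewrite opp_IZR, <- INR_IZR_INZ. lra.
Qed.

Definition DZ (s : Z -> R) : Z -> R := fun z => s z - s (z - 1)%Z.
Fixpoint DZN (m : nat) (s : Z -> R) : Z -> R :=
  match m with O => s | S k => DZ (DZN k s) end.
Definition hhZ (b : R) (z : Z) : R := if Z_lt_dec z 0 then 0 else hhN b (Z.to_nat z).
Definition SZ (g : R) (s : Z -> R) : Z -> R :=
  fun z => rsum (Z.to_nat z) (fun j => hhN g j * s (z - Z.of_nat j)%Z).

Lemma rsumS n F : rsum (S n) F = rsum n F + F n.
Proof. reflexivity. Qed.

Lemma rsum_ext n F G : (forall k, (k < n)%nat -> F k = G k) -> rsum n F = rsum n G.
Proof. induction n as [|n IH]; intros H; simpl; auto. rewrite IH by (intros; apply H; lia). rewrite H by lia. auto. Qed.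

Lemma rsum_plus n F G : rsum n (fun k => F k + G k) = rsum n F + rsum n G.
Proof. induction n as [|n IH]; simpl; [ring|]. rewrite IH. ring. Qed.

Lemma rsum_minus n F G : rsum n (fun k => F k - G k) = rsum n F - rsum n G.
Proof. induction n as [|n IH]; simpl; [ring|]. rewrite IH. ring. Qed.

Lemma rsum_scal n a F : rsum n (fun k => a * F k) = a * rsum n F.
Proof. induction n as [|n IH]; simpl; [ring|]. rewrite IH. ring. Qed.

Lemma rsum_split p n F : rsum (p + n) F = rsum p F + rsum n (fun k => F (p + k)%nat).
Proof. induction n as [|n IH]; simpl; [rewrite Nat.add_0_r; ring|]. rewrite Nat.add_succ_r. simpl. rewrite IH. ring. Qed.

Lemma rsum_zero n F : (forall k, (k < n)%nat -> F k = 0) -> rsum n F = 0.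
Proof. intros H. rewrite (rsum_ext n F (fun _ => 0 * 0)) by (intros; rewrite H; auto; ring).
  rewrite rsum_scal. ring. Qed.

Lemma hh_pred b j : hhN (b - 1) (S j) = hhN b j * (b - 1) / INR (S j).
Proof.
  induction j as [|j IH].
  - rewrite hhS. simpl. field.
  - rewrite hhS, IH, hhS. rewrite !S_INR. pose proof (pos_INR j). field. lra.
Qed.

Lemma pascal b j : hhN b (S j) - hhN b j = hhN (b - 1) (S j).
Proof. rewrite hh_pred, hhS, S_INR. pose proof (pos_INR j). field. lra. Qed.

Lemma pascalZ b w : hhZ b w - hhZ b (w - 1) = hhZ (b - 1) w.
Proof.
  unfold hhZ. destruct (Z_lt_dec w 0); destruct (Z_lt_dec (w - 1) 0); try lia.
  - ring.
  - assert (w = 0)%Z by lia. subst. simpl. ring.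
  - replace (Z.to_nat w) with (S (Z.to_nat (w - 1))) by lia. apply pascal.
Qed.

Lemma SZ_nonpos g s z : (z <= 0)%Z -> SZ g s z = 0.
Proof. intros H. unfold SZ. replace (Z.to_nat z) with O by lia. reflexivity. Qed.

Lemma SZ_base g s z : SZ g s z - SZ g s (z - 1) = SZ g (DZ s) z + hhZ g (z - 1) * s 0%Z.
Proof.
  destruct (Z_le_gt_dec z 0) as [Hz|Hz].
  - rewrite !SZ_nonpos by lia. unfold hhZ. destruct (Z_lt_dec (z-1) 0); [ring|lia].
  - unfold hhZ. destruct (Z_lt_dec (z-1) 0); [lia|].
    unfold SZ, DZ. replace (Z.to_nat z) with (S (Z.to_nat (z - 1))) by lia.
    set (nn := Z.to_nat (z - 1)).
    rewrite (rsum_ext _ (fun j => hhN g j * (s (z - Z.of_nat j)%Z - s (z - Z.of_nat j - 1)%Z))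
      (fun j => hhN g j * s (z - Z.of_nat j)%Z - hhN g j * s (z - 1 - Z.of_nat j)%Z)).
    2:{ intros k _. replace (z - Z.of_nat k - 1)%Z with (z - 1 - Z.of_nat k)%Z by lia. ring. }
    rewrite rsum_minus. rewrite (rsumS nn (fun k => hhN g k * s (z - 1 - Z.of_nat k)%Z)).
    replace (z - 1 - Z.of_nat nn)%Z with 0%Z by (unfold nn; lia). ring.
Qed.

Lemma DZN_S q s z : DZN (S q) s z = DZN q s z - DZN q s (z - 1)%Z.
Proof. reflexivity. Qed.

Lemma SZ_main g q s z :
  DZN q (SZ g s) z = SZ g (DZN q s) z
    + rsum q (fun k => hhZ (g - INR q + INR k + 1) (z - 1) * DZN k s 0%Z).
Proof.
  revert z. induction q as [|q IH]; intros z.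
  - simpl. ring.
  - rewrite DZN_S, !IH.
    assert (Hb := SZ_base g (DZN q s) z).
    change (DZ (DZN q s)) with (DZN (S q) s) in Hb.
    rewrite rsumS.
    replace (g - INR (S q) + INR q + 1) with g by (rewrite S_INR; ring).
    rewrite (rsum_ext q (fun k => hhZ (g - INR (S q) + INR k + 1) (z - 1) * DZN k s 0%Z)
       (fun k => (hhZ (g - INR q + INR k + 1) (z - 1) - hhZ (g - INR q + INR k + 1) (z - 1 - 1)) * DZN k s 0%Z)).
    2:{ intros k _. rewrite pascalZ. f_equal. f_equal. rewrite S_INR. ring. }
    rewrite (rsum_ext q (fun k => (hhZ (g - INR q + INR k + 1) (z - 1) - hhZ (g - INR q + INR k + 1) (z - 1 - 1)) * DZN k s 0%Z)
       (fun k => hhZ (g - INR q + INR k + 1) (z - 1) * DZN k s 0%Z - hhZ (g - INR q + INR k + 1) (z - 1 - 1) * DZN k s 0%Z)).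
    2:{ intros; ring. }
    rewrite rsum_minus. lra.
Qed.

Lemma DZN_add p n s : DZN p (DZN n s) = DZN (p + n) s.
Proof. induction p as [|p IH]; simpl; auto. rewrite IH. auto. Qed.

Definition seqof (c : R) (u : R -> R) : Z -> R := fun z => u (c - IZR z).

Lemma up_IZR z : up (IZR z) = (z + 1)%Z.
Proof. symmetry. apply tech_up; rewrite plus_IZR; simpl; lra. Qed.

Lemma DeltaN_Z c u m z : DeltaN m u (c - IZR z) = (-1) ^ m * DZN m (seqof c u) z.
Proof.
  revert z. induction m as [|m IH]; intros z.
  - simpl. unfold seqof. ring.
  - change (DeltaN (S m) u (c - IZR z)) with (DeltaN m u (c - IZR z + 1) - DeltaN m u (c - IZR z)).
    replace (c - IZR z + 1) with (c - IZR (z - 1)) by (rewrite minus_IZR; simpl; ring).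
    rewrite !IH. rewrite DZN_S. simpl pow. ring.
Qed.

Lemma m1sq m : (-1) ^ m * (-1) ^ m = 1.
Proof. rewrite <- Rpow_mult_distr. replace (-1 * -1) with 1 by ring. apply pow1. Qed.

Lemma oDelta_Z c u m z : oDelta m u (c - IZR z) = DZN m (seqof c u) z.
Proof. unfold oDelta. rewrite DeltaN_Z, <- Rmult_assoc, m1sq. ring. Qed.

Lemma seqof_oDelta c u m : seqof c (oDelta m u) = DZN m (seqof c u).
Proof. apply functional_extensionality. intros z. apply oDelta_Z. Qed.

Lemma nabla_sum_Z c g u z : 0 < g -> nabla_sum c g u (c - IZR z) = SZ g (seqof c u) z.
Proof.
  intros Hg. unfold nabla_sum, SZ, seqof.
  replace (c - (c - IZR z)) with (IZR z) by ring. rewrite up_IZR.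
  replace (z + 1 - 1)%Z with z by lia.
  unfold Gamma at 1. rewrite Rinv_inv. rewrite <- rsum_scal. apply rsum_ext. intros j _.
  replace (c - IZR z + INR j - (c - IZR z - 1)) with (INR j + 1) by ring.
  replace (c - IZR z + INR j) with (c - IZR (z - Z.of_nat j)) by (rewrite minus_IZR, <- INR_IZR_INZ; ring).
  rewrite <- (rising_hh g j). ring.
  apply Rgt_not_eq, rgi_pos. pose proof (pos_INR j). lra.
Qed.

Lemma seqof_nabla_sum c g u : 0 < g -> seqof c (nabla_sum c g u) = SZ g (seqof c u).
Proof. intros Hg. apply functional_extensionality. intros z. apply nabla_sum_Z; auto. Qed.

Lemma neg_case a : a < 0 ->
  (INR (Z.to_nat (gis (- a) + 1)) - - a = 0 /\ a = - INR (Z.to_nat (gis (- a) + 1))) \/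
  (0 < INR (Z.to_nat (gis (- a) + 1)) - - a /\ forall w, a <> IZR w).
Proof.
  intros Ha. unfold gis. rewrite Ropp_involutive.
  destruct (archimed a) as [H1 H2].
  assert (Hu : (up a <= 0)%Z) by (apply Z.lt_succ_r; apply lt_IZR; simpl; lra).
  rewrite INR_Z by lia. rewrite plus_IZR, opp_IZR. simpl.
  destruct (Req_dec (- IZR (up a) + 1 - - a) 0) as [E|E].
  - left. split; lra.
  - right. split; [lra|]. intros w Hw. apply E. rewrite Hw, up_IZR, plus_IZR. simpl. ring.
Qed.

Lemma seqof_nabla_diff c be g :
  seqof c (nabla_diff c be g) =
  DZN (Z.to_nat (gis be + 1)) (seqof c (if Req_dec_T (INR (Z.to_nat (gis be + 1)) - be) 0 then g
              else nabla_sum c (INR (Z.to_nat (gis be + 1)) - be) g)).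
Proof.
  apply functional_extensionality. intros z. unfold seqof at 1, nabla_diff.
  rewrite DeltaN_Z, <- Rmult_assoc, m1sq. ring.
Qed.

Lemma term_eq a p k (n0 : nat) : (0 < p)%nat ->
  RGammaInv (a + INR k + INR n0) <> 0 ->
  rising (IZR (Z.of_nat (p + n0))) (a - INR p + INR k) / Gamma (a + INR k - INR p + 1)
  = hhZ (a - INR p + INR k + 1) (Z.of_nat (p + n0) - 1).
Proof.
  intros Hp Hnz. unfold hhZ. destruct (Z_lt_dec _ 0); [lia|].
  replace (Z.to_nat (Z.of_nat (p + n0) - 1)) with (p + n0 - 1)%nat by lia.
  rewrite <- (rising_hh (a - INR p + INR k + 1)).
  - unfold Gamma, Rdiv. rewrite Rinv_inv. f_equal; [f_equal|f_equal; ring].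
    + rewrite <- INR_IZR_INZ, minus_INR by lia. simpl. ring.
    + ring.
  - rewrite minus_INR, plus_INR by lia. simpl. replace (a - INR p + INR k + 1 + (INR p + INR n0 - 1)) with (a + INR k + INR n0) by ring. auto.
Qed.

Lemma term_zero a p k (n0 : nat) m : a + INR k - INR p + 1 = - INR m ->
  rising (IZR (Z.of_nat (p + n0))) (a - INR p + INR k) / Gamma (a + INR k - INR p + 1) = 0.
Proof.
  intros H. rewrite H. unfold Gamma, Rdiv. rewrite Rinv_inv, rgi_negint. ring.
Qed.

Theorem theorem2p12 (alpha : R) (p : nat) (b : R) (f : R -> R)
  (hp : (0 < p)%nat) :
  forall t : R, inN (b - 2 * INR p + 1) t ->
    nabla_op (b - INR p + 1) alpha (oDelta p f) t =
    oDelta p (nabla_op (b - INR p + 1) alpha f) t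
    - rsum p (fun k =>
        rising (b - INR p + 1 - t) (alpha - INR p + INR k)
        / Gamma (alpha + INR k - INR p + 1)
        * oDelta k f (b - INR p + 1)).
Proof.
  intros t [n0 Ht]. set (c := b - INR p + 1). set (z := Z.of_nat (p + n0)).
  assert (Htz : t = c - IZR z).
  { unfold z, c. rewrite <- INR_IZR_INZ, plus_INR. rewrite Ht. ring. }
  assert (Hcz : c - t = IZR z) by lra.
  rewrite Hcz, Htz. clear Ht Htz Hcz.
  set (G := seqof c f).
  rewrite oDelta_Z.
  change (nabla_op c alpha (oDelta p f) (c - IZR z)) with (seqof c (nabla_op c alpha (oDelta p f)) z).
  rewrite (rsum_ext p _ (fun k => rising (IZR z) (alpha - INR p + INR k) / Gamma (alpha + INR k - INR p + 1) * DZN k G 0%Z)).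
  2:{ intros k _. f_equal. transitivity (oDelta k f (c - IZR 0)); [f_equal; simpl; ring | apply oDelta_Z]. }
  unfold nabla_op. destruct (Rlt_dec 0 alpha) as [Hpos|Hnpos].
  - rewrite !seqof_nabla_sum by auto. rewrite seqof_oDelta. fold G.
    rewrite SZ_main.
    rewrite (rsum_ext p (fun k => rising (IZR z) (alpha - INR p + INR k) / Gamma (alpha + INR k - INR p + 1) * DZN k G 0%Z) (fun k => hhZ (alpha - INR p + INR k + 1) (z - 1) * DZN k G 0%Z)).
    2:{ intros k _. f_equal. apply term_eq; auto. apply Rgt_not_eq, rgi_pos.
        pose proof (pos_INR k). pose proof (pos_INR n0). lra. }
    ring.
  - destruct (Req_dec_T alpha 0) as [H0|H0].
    + rewrite seqof_oDelta. fold G.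
      rewrite rsum_zero; [ring|]. intros k Hk.
      unfold z; rewrite (term_zero _ _ _ _ (p - 1 - k)); [ring|].
      rewrite !minus_INR by lia. simpl. rewrite H0. ring.
    + assert (Ha : alpha < 0) by lra.
      rewrite !seqof_nabla_diff.
      destruct (neg_case alpha Ha) as [[E Eq]|[E Hni]].
      * destruct (Req_dec_T _ 0) as [_|ne]; [|contradiction].
        rewrite seqof_oDelta. fold G. set (n := Z.to_nat (gis (- alpha) + 1)) in *.
        rewrite !DZN_add, Nat.add_comm.
        rewrite rsum_zero; [ring|]. intros k Hk.
        unfold z; rewrite (term_zero _ _ _ _ (n + (p - 1 - k))); [ring|].
        rewrite plus_INR, !minus_INR by lia. simpl. rewrite Eq. ring.
      * destruct (Req_dec_T _ 0) as [e|_]; [lra|].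
        set (n := Z.to_nat (gis (- alpha) + 1)) in *.
        set (g := INR n - - alpha) in *.
        rewrite !seqof_nabla_sum by auto. rewrite seqof_oDelta. fold G.
        rewrite DZN_add, !SZ_main, DZN_add.
        rewrite (Nat.add_comm n p), rsum_split.
        rewrite (rsum_ext p (fun k => rising (IZR z) (alpha - INR p + INR k) / Gamma (alpha + INR k - INR p + 1) * DZN k G 0%Z) (fun k => hhZ (g - INR (p + n) + INR k + 1) (z - 1) * DZN k G 0%Z)).
        2:{ intros k _. f_equal. unfold z at 1. rewrite term_eq; auto.
            - f_equal. unfold g. rewrite plus_INR. ring.
            - apply rgi_nonint. intros w Hw. apply (Hni (w - Z.of_nat k - Z.of_nat n0)%Z).
              rewrite !minus_IZR, <- !INR_IZR_INZ. lra. }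
        rewrite (rsum_ext n (fun k => hhZ (g - INR n + INR k + 1) (z - 1) * DZN k (DZN p G) 0%Z)
           (fun k => hhZ (g - INR (p + n) + INR (p + k) + 1) (z - 1) * DZN (p + k) G 0%Z)).
        2:{ intros k _. rewrite DZN_add, Nat.add_comm. f_equal. f_equal. rewrite !plus_INR. ring. }
        ring.
Qed.
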